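(* Let $t\geq 2$, $n\geq 1$ be integers and let $P$ be a finite poset with the unique cover twin property (UCTP) having at least three elements. If $\mathcal{F}\subseteq[t]^n$ is induced $P$-saturated, then every coordinate $i\in[n]$ is separating for $\mathcal{F}$.
   Context: For positive integers $n,t$, $[n]=\{1,\dots,n\}$ and $[t]^n$ is the set of functions $f:[n]\to[t]$, partially ordered by $f\leq g$ iff $f(i)\leq g(i)$ for all $i$. An induced copy of $P$ in $\mathcal{F}\subseteq[t]^n$ is an injective map $\phi:P\to\mathcal{F}$ with $\phi(x)\leq\phi(y)$ iff $x\leq_P y$. $\mathcal{F}$ is induced $P$-free if it contains no induced copy of $P$, and induced $P$-saturated if it is induced $P$-free and for every $f\in[t]^n\setminus\mathcal{F}$, $\mathcal{F}\cup\{f\}$ contains an induced copy of $P$. For $f\in[t]^n$, $D_i(f)\in[t]^{n-1}$ is obtained by deleting coordinate $i$: $D_i(f)(x)=f(x)$ for $x<i$, $D_i(f)(x)=f(x+1)$ for $i\leq x\leq n-1$. Coordinate $i$ is separating for $\mathcal{F}$ if there exist distinct $f,f'\in\mathcal{F}$ with $D_i(f)\leq D_i(f')$ and $f(i)>f'(i)$. In a poset $P$, $x$ covers $y\neq x$ if $y\leq_P x$ and no $z\in P\setminus\{x,y\}$ satisfies $y\leq_P z\leq_P x$. $P$ has the UCTP if whenever $x$ covers $y$, there exists $y'\in P\setminus\{x,y\}$ such that $x$ covers $y'$. *)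

(* Defs.v *)
From mathcomp Require Import all_boot all_order.
Set Implicit Arguments. Unset Strict Implicit. Unset Printing Implicit Defensive.
Import Order.Theory.

(* [t]^n is modelled as {ffun 'I_n -> 'I_t} (values 0..t-1 instead of 1..t,
   coordinates 0..n-1 instead of 1..n); order is pointwise. *)


Definition gle (n t : nat) (f g : {ffun 'I_n -> 'I_t}) : bool :=
  [forall i, f i <= g i].

Definition induced_copy d (P : finPOrderType d) (n t : nat)
  (F : {set {ffun 'I_n -> 'I_t}}) (phi : P -> {ffun 'I_n -> 'I_t}) : Prop :=
  injective phi /\ (forall x, phi x \in F) /\
  (forall x y, gle (phi x) (phi y) = (x <= y)%O).

Definition has_induced_copy d (P : finPOrderType d) (n t : nat)
  (F : {set {ffun 'I_n -> 'I_t}}) : Prop :=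
  exists phi : P -> {ffun 'I_n -> 'I_t}, @induced_copy d P n t F phi.

Definition induced_free d (P : finPOrderType d) (n t : nat)
  (F : {set {ffun 'I_n -> 'I_t}}) : Prop := ~ @has_induced_copy d P n t F.

Definition induced_saturated d (P : finPOrderType d) (n t : nat)
  (F : {set {ffun 'I_n -> 'I_t}}) : Prop :=
  @induced_free d P n t F /\
  (forall f : {ffun 'I_n -> 'I_t}, f \notin F -> @has_induced_copy d P n t (f |: F)).

(* deletion of coordinate i: D i f x = f x for x < i, f (x+1) for x >= i *)
Definition del (n t : nat) (i : 'I_n) (f : {ffun 'I_n -> 'I_t})
  : {ffun 'I_n.-1 -> 'I_t} :=
  [ffun x : 'I_n.-1 => f (insubd i (bump i x))].

Definition separating (n t : nat) (F : {set {ffun 'I_n -> 'I_t}}) (i : 'I_n)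
  : Prop :=
  exists f f', [/\ f \in F, f' \in F, f != f',
                   gle (del i f) (del i f') & (f' i < f i)%N].

Definition covers d (P : porderType d) (x y : P) : Prop :=
  y != x /\ (y <= x)%O /\
  ~ (exists z, [/\ z != x, z != y, (y <= z)%O & (z <= x)%O]).

Definition UCTP d (P : porderType d) : Prop :=
  forall x y : P, covers x y ->
    exists y' : P, [/\ y' != x, y' != y & covers x y'].

(* Main.v *)
Require Import Defs.
From mathcomp Require Import all_boot all_order.
From mathcomp Require Import zify.

Set Implicit Arguments. Unset Strict Implicit. Unset Printing Implicit Defensive.
Import Order.Theory.

Lemma insubd_lift n (i : 'I_n) (x : 'I_n.-1) : insubd i (bump i x) = lift i x.
Proof. by apply: val_inj; rewrite val_insubd /=; have /= -> := ltn_ord (lift i x). Qed.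

Lemma delE n t (i : 'I_n) (f : {ffun 'I_n -> 'I_t}) x : del i f x = f (lift i x).
Proof. by rewrite /del ffunE insubd_lift. Qed.

Lemma gle_del n t (i : 'I_n) (f g : {ffun 'I_n -> 'I_t}) :
  gle f g = gle (del i f) (del i g) && (f i <= g i).
Proof.
apply/idP/idP.
- move/forallP=> H; apply/andP; split; last exact: H.
  by apply/forallP=> x; rewrite !delE; exact: H.
- case/andP => /forallP H Hi; apply/forallP => j.
  case: (unliftP i j) => [x ->|->] //.
  by move: (H x); rewrite !delE.
Qed.

Lemma gle_refl n t (f : {ffun 'I_n -> 'I_t}) : gle f f.
Proof. by apply/forallP. Qed.

Lemma gle_sum n t (f h : {ffun 'I_n -> 'I_t}) :
  gle f h -> \sum_j (h j : nat) <= \sum_j (f j : nat) -> f = h.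
Proof.
move=> /forallP H Hs.
have L := @leqif_sum _ xpredT (fun j => f j == h j :> nat) (fun j => f j : nat)
   (fun j => h j : nat) (fun j _ => leqif_eq (H j)).
have : (\sum_j (f j : nat) == \sum_j (h j : nat)).
  by rewrite eqn_leq Hs L.
rewrite L.2 => /forallP E; apply/ffunP => j; apply: val_inj; exact/eqP/E.
Qed.

Lemma twinP d (P : finPOrderType d) : UCTP P -> forall a b : P, a != b ->
  (a <= b)%O -> (forall z, z != a -> z != b -> (z <= a)%O = (z <= b)%O) -> False.
Proof.
move=> U a b ab alb tw.
have cov : covers b a.
  split=> //; split=> //; case=> z [zb za az zb'].
  rewrite -(tw z za zb) in zb'.
  by move: za; rewrite (@le_anti _ _ z a) ?eqxx // az zb'.
have [y' [y'b y'a [_ [y'le ncov]]]] := U b a cov.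
apply: ncov; exists a; split=> //; first by rewrite eq_sym.
by rewrite tw.
Qed.

Section Main.
Variables (n t : nat) (d : Order.disp_t) (P : finPOrderType d)
  (F : {set {ffun 'I_n -> 'I_t}}).

Lemma twin_copy : 2 <= #|P| -> UCTP P -> @induced_saturated d P n t F ->
  forall f g : {ffun 'I_n -> 'I_t}, f \in F -> g \notin F ->
  (forall h, h \in F -> h != f -> gle h g = gle h f /\ gle g h = gle f h) ->
  gle f g || gle g f -> False.
Proof.
move=> P2 U [free sat] f g fF gF tw cmp.
have [phi [inj [mem ord]]] := sat g gF.
have memF z : phi z != g -> phi z \in F.
  by move=> ne; move: (mem z); rewrite in_setU1 (negbTE ne).
case: (boolP [exists x, phi x == g]) => [/existsP [x /eqP phix]|]; last first.
  move=> /existsPn H; apply: free; exists phi; split=> //; split=> // z; exact: memF.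
have phiz z : z != x -> phi z \in F /\ phi z != g.
  move=> zx; have ne : phi z != g by rewrite -phix (inj_eq inj).
  by split=> //; apply: memF.
have fg : f != g by apply/eqP => E; rewrite -E fF in gF.
case: (boolP [exists y, phi y == f]) => [/existsP [y /eqP phiy]|]; last first.
  move=> /existsPn H; apply: free.
  exists (fun z => if z == x then f else phi z); split; last split.
  - move=> z1 z2; case: (eqVneq z1 x) => [->|n1]; case: (eqVneq z2 x) => [->|n2] //.
    + by move=> E; move: (H z2); rewrite -E eqxx.
    + by move=> E; move: (H z1); rewrite E eqxx.
    + exact: inj.
  - by move=> z; case: (eqVneq z x) => // /phiz [].
  - move=> z1 z2; case: (eqVneq z1 x) => [->|n1]; case: (eqVneq z2 x) => [->|n2].
    + by rewrite gle_refl lexx.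
    + have [h1 h2] := phiz _ n2.
      by rewrite -(tw _ h1 (H z2)).2 -phix ord.
    + have [h1 h2] := phiz _ n1.
      by rewrite -(tw _ h1 (H z1)).1 -phix ord.
    + exact: ord.
have yx : y != x by apply/eqP => E; move: fg; rewrite -phiy -phix E eqxx.
have twP z : z != y -> z != x -> (z <= y)%O = (z <= x)%O.
  move=> zy zx; have [h1 h2] := phiz _ zx.
  have hf : phi z != f by rewrite -phiy (inj_eq inj).
  by rewrite -!ord phiy phix (tw _ h1 hf).1.

case/orP: cmp; rewrite -phiy -phix ord => le.
  exact: (twinP U yx le twP).
have xy : x != y by rewrite eq_sym.
exact: (twinP U xy le (fun z zx zy => esym (twP z zy zx))).
Qed.

Lemma construct (i : 'I_n) : 2 <= #|P| -> UCTP P -> @induced_saturated d P n t F ->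
  (forall h k, h \in F -> k \in F -> h != k -> gle (del i h) (del i k) -> h i <= k i) ->
  forall f (v : 'I_t), f \in F -> v != f i ->
  (forall h, h \in F -> h != f -> gle (del i h) (del i f) -> h i <= v) ->
  (forall h, h \in F -> h != f -> gle (del i f) (del i h) -> v <= h i) -> False.
Proof.
move=> P2 U sat NS f v fF vf A B.
pose g : {ffun 'I_n -> 'I_t} := [ffun j => if j == i then v else f j].
have gi : g i = v by rewrite ffunE eqxx.
have dg : del i g = del i f.
  by apply/ffunP => x; rewrite !delE ffunE eq_sym (negbTE (neq_lift i x)).
have gf : g != f by apply/eqP => E; move: vf; rewrite -gi E eqxx.
apply: (twin_copy P2 U sat fF (g := g)).
- apply/negP => gF.
  have h1 := NS g f gF fF gf; rewrite dg gle_refl gi in h1.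
  have fg' : f != g by rewrite eq_sym.
  have h2 := NS f g fF gF fg'; rewrite dg gle_refl gi in h2.
  by move: vf; rewrite eqE /= eqn_leq h1 // h2.
- move=> h hF hf; rewrite !(gle_del i) dg gi; split.
  + case: (boolP (gle (del i h) (del i f))) => //= D.
    by rewrite (A h hF hf D) (NS h f hF fF hf D).
  + case: (boolP (gle (del i f) (del i h))) => //= D.
    have fh : f != h by rewrite eq_sym.
    by rewrite (B h hF hf D) (NS f h fF hF fh D).
- by rewrite !(gle_del i) dg gi gle_refl /= leq_total.
Qed.

End Main.

Theorem mainTheorem9 (n t : nat) (d : Order.disp_t) (P : finPOrderType d)
  (F : {set {ffun 'I_n -> 'I_t}}) :
  2 <= t -> 1 <= n -> @UCTP d P -> 3 <= #|P| ->
  @induced_saturated d P n t F ->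
  forall i : 'I_n, separating F i.
Proof.
move=> t2 _ U P3 sat i.
have P2 : 2 <= #|P| by apply: leq_trans P3.
case: (boolP [exists f, exists f', [&& f \in F, f' \in F, f != f',
        gle (del i f) (del i f') & (f' i < f i)]]).
  by move=> /existsP [f /existsP [f' /and5P [? ? ? ? ?]]]; exists f, f'.
move=> /existsPn NSb; exfalso.
have NS h k : h \in F -> k \in F -> h != k -> gle (del i h) (del i k) -> h i <= k i.
  move=> hF kF hk D; move/existsPn: (NSb h) => /(_ k).
  by rewrite hF kF hk D /= -leqNgt.
have [f0 f0F] : exists f0, f0 \in F.
  case: (set_0Vmem F) => [F0|[x xF]]; last by exists x.
  have t0 : 0 < t by apply: leq_trans t2.
  pose g : {ffun 'I_n -> 'I_t} := [ffun => Ordinal t0].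
  have gF : g \notin F by rewrite F0 inE.
  have [phi [inj [mem _]]] := sat.2 g gF.
  have [a [b [_ _ ab]]] := card_gt1P P2.
  move: ab; rewrite (inj a b) ?eqxx //.
  by move: (mem a) (mem b); rewrite F0 setU0 !inE => /eqP -> /eqP ->.
pose S := [pred h | (h \in F) && (h i == f0 i)].
have Sf0 : S f0 by rewrite /S /= f0F eqxx.
have sumF (f h : {ffun 'I_n -> 'I_t}) := @gle_sum n t f h.
case: (ltnP (f0 i).+1 t) => Hc.
  case: (arg_maxnP (fun h : {ffun 'I_n -> 'I_t} => \sum_j (h j : nat)) Sf0)
    => f /andP [fF /eqP fi] Hmax.
  apply: (construct P2 U sat NS (f := f) (v := Ordinal Hc)) => //.
  - by rewrite eqE /= fi; apply/eqP => /esym /n_Sn.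
  - move=> h hF hf D; have := NS h f hF fF hf D; rewrite /= -fi => /leqW //.
  - move=> h hF hf D; have fh : f != h by rewrite eq_sym.
    have := NS f h fF hF fh D.
    rewrite /= -fi leq_eqVlt => /orP [/eqP E|//].
    have hS : S h by rewrite /S /= hF; apply/eqP; rewrite -fi; apply: val_inj.
    have le : gle f h by rewrite (gle_del i) D -E leqnn.
    by move: hf; rewrite (sumF _ _ le (Hmax h hS)) eqxx.
case: (arg_minnP (fun h : {ffun 'I_n -> 'I_t} => \sum_j (h j : nat)) Sf0)
    => f /andP [fF /eqP fi] Hmin.
have c0 : 0 < f0 i by have := ltn_ord (f0 i); move: Hc t2; clear; lia.
have Hv : (f0 i).-1 < t by have := ltn_ord (f0 i); clear; lia.
apply: (construct P2 U sat NS (f := f) (v := Ordinal Hv)) => //.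
- apply/eqP => /(congr1 val) /=; rewrite fi; move: c0.
  by case: (nat_of_ord (f0 i)) => [|k] //= _; lia.
- move=> h hF hf D; have := NS h f hF fF hf D.
  rewrite /= leq_eqVlt => /orP [/eqP E|].
    2: by rewrite fi; case: (nat_of_ord (f0 i)) => // k; rewrite ltnS.
  have hS : S h by rewrite /S /= hF; apply/eqP; rewrite -fi; apply: val_inj.
  have le : gle h f by rewrite (gle_del i) D E leqnn.
  by move: hf; rewrite (sumF _ _ le (Hmin h hS)) eqxx.
- move=> h hF hf D; have fh : f != h by rewrite eq_sym.
    have := NS f h fF hF fh D.
  by rewrite /= fi => H; apply: leq_trans H; exact: leq_pred.
Qed.
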